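(* Let $R=R_1\times\dots\times R_w$ be a finite principal ideal ring, with $R_1,\dots,R_w$ finite chain rings, and let $C=C_1\times\dots\times C_w\subseteq R^n\cong R_1^n\times\dots\times R_w^n$ be an $R$-linear code, $C_i=\pi_i(C)$ nonzero. Let $r\ge1$ and suppose that for every $i$ the code $C_i$ has locality $r$, rank $K_i$ over $R_i$, and minimum distance $\mathrm d(C_i)=n-K_i-\lceil K_i/r\rceil+2$ (i.e. $C_i$ meets the LRC bound). Then, with $K$ the rank of $C$ over $R$, $$\mathrm d(C)=n-K-\left\lceil\frac{K}{r}\right\rceil+2 .$$
   Context: The rank of a linear code $D$ over a ring $S$ is the minimum $K$ such that there is an $S$-module monomorphism $D\to S^K$. A coordinate $i$ of a code $D$ has locality $r$ if there is $S_i\subseteq\{1,\dots,n\}\setminus\{i\}$ with $|S_i|\le r$ and $|D_{S_i}|=|D_{S_i\cup\{i\}}|$, where $D_S$ is the code punctured to the coordinates in $S$; $D$ has locality $r$ if every coordinate does. $\mathrm d$ denotes minimum Hamming distance. A finite chain ring is a finite commutative local ring whose ideals are totally ordered by inclusion. *)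

(* Defs.v *)
From HB Require Import structures.
From mathcomp Require Import all_boot all_order all_algebra.
Set Implicit Arguments. Unset Strict Implicit. Unset Printing Implicit Defensive.
Import Order.TTheory GRing.Theory Num.Theory.
Local Open Scope ring_scope.

Section Defs.
Variable S : finComNzRingType.

Definition is_ideal (I : {set S}) : Prop :=
  [/\ 0 \in I, {in I &, forall x y, x + y \in I} & forall a, {in I, forall x, a * x \in I}].

Definition is_maximal_ideal (M : {set S}) : Prop :=
  [/\ is_ideal M, M != [set: S] &
      forall J, is_ideal J -> M \subset J -> J = M \/ J = [set: S]].

Definition is_local_ring : Prop :=
  exists M, is_maximal_ideal M /\ forall M', is_maximal_ideal M' -> M' = M.

Definition is_chain_ring : Prop :=
  is_local_ring /\
  forall I J, is_ideal I -> is_ideal J -> I \subset J \/ J \subset I.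

Variable n : nat.

Definition is_linear_code (D : {set 'rV[S]_n}) : Prop :=
  [/\ 0 \in D, {in D &, forall x y, x + y \in D} & forall a, {in D, forall x, a *: x \in D}].

Definition embeds_in (D : {set 'rV[S]_n}) (K : nat) : Prop :=
  exists f : 'rV[S]_n -> 'rV[S]_K,
    [/\ {in D &, forall x y, f (x + y) = f x + f y},
        forall a, {in D, forall x, f (a *: x) = a *: f x} &
        {in D &, injective f}].

Definition is_rank (D : {set 'rV[S]_n}) (K : nat) : Prop :=
  embeds_in D K /\ forall K', embeds_in D K' -> (K <= K')%N.

(* punctured code D_T, encoded by zeroing coordinates outside T
   (in bijection with the restrictions of codewords to T) *)
Definition puncture (D : {set 'rV[S]_n}) (T : {set 'I_n}) : {set 'rV[S]_n} :=
  [set \row_j (if j \in T then (x : 'rV[S]_n) 0 j else 0) | x in D].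

Definition coord_locality (D : {set 'rV[S]_n}) (r : nat) (i : 'I_n) : Prop :=
  exists T : {set 'I_n}, [/\ i \notin T, (#|T| <= r)%N &
                             #|puncture D T| = #|puncture D (i |: T)| ].

Definition has_locality (D : {set 'rV[S]_n}) (r : nat) : Prop :=
  forall i, coord_locality D r i.

Definition hamming (x y : 'rV[S]_n) : nat := #|[set j : 'I_n | x 0 j != y 0 j]|.

(* minimum Hamming distance (the default n is only reached for codes with
   fewer than two words, which never occurs below) *)
Definition dmin (D : {set 'rV[S]_n}) : nat :=
  \big[minn/n]_(x in D) \big[minn/n]_(y in D | x != y) hamming x y.

End Defs.

Definition ceil_div (a b : nat) : nat := ((a + b.-1) %/ b)%N.

Definition proj_code (R T : finComNzRingType) (f : {rmorphism R -> T}) (n : nat)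
  (C : {set 'rV[R]_n}) : {set 'rV[T]_n} := [set map_mx f x | x in C].

(* Main.v *)
Require Import Defs.
From HB Require Import structures.
From mathcomp Require Import all_boot all_order all_algebra.
From mathcomp Require Import zify.
From Stdlib Require Import ClassicalEpsilon.
Import GRing.Theory.
Local Open Scope ring_scope.
Set Implicit Arguments. Unset Strict Implicit.

Section Gen.
Variable S : finComNzRingType.

Lemma bigmin_le (I : eqType) (r : seq I) (P : pred I) (F : I -> nat) m j :
  j \in r -> P j -> (\big[minn/m]_(i <- r | P i) F i <= F j)%N.
Proof.
elim: r => // a r IH; rewrite inE big_cons => /orP[/eqP<- ->|jr Pj].
  by rewrite geq_minl.
by case: (P a); rewrite ?geq_min IH ?orbT.
Qed.

Lemma dmin_le n (D : {set 'rV[S]_n}) x y :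
  x \in D -> y \in D -> x != y -> (dmin D <= hamming x y)%N.
Proof.
move=> xD yD xy; rewrite /dmin.
apply: leq_trans (bigmin_le (P := fun z => z \in D)
   (fun z => \big[minn/n]_(y in D | z != y) hamming z y) n (mem_index_enum x) xD) _.
by apply: (bigmin_le (P := fun z => (z \in D) && (x != z)));
  rewrite ?mem_index_enum // yD.
Qed.

Lemma dmin_geq n (D : {set 'rV[S]_n}) (P : nat -> Prop) :
  P n -> (forall a b, P a -> P b -> P (minn a b)) ->
  (forall x y, x \in D -> y \in D -> x != y -> P (hamming x y)) -> P (dmin D).
Proof.
move=> Pn Pm PH; rewrite /dmin; apply: (big_ind P) => // x xD.
apply: (big_ind P) => // y /andP[yD xy]; exact: PH.
Qed.

Lemma dmin_leq_n n (D : {set 'rV[S]_n}) : (dmin D <= n)%N.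
Proof.
apply: (dmin_geq (P := fun v => v <= n)%N) => //.
  by move=> a b ha hb; rewrite geq_min ha.
move=> x y _ _ _; rewrite /hamming; apply: leq_trans (max_card _) _.
by rewrite card_ord.
Qed.

Lemma embeds_pad n (D : {set 'rV[S]_n}) k m :
  (k <= m)%N -> embeds_in D k -> embeds_in D m.
Proof.
move=> km [f [fD fZ finj]].
exists (fun x => \row_(j < m) (if (insub (nat_of_ord j) : option 'I_k) is Some j'
                                then f x 0 j' else 0)); split.
- move=> x y xD yD; apply/rowP => j; rewrite !mxE.
  by case: insub => [j'|]; rewrite ?fD ?mxE ?addr0.
- move=> a x xD; apply/rowP => j; rewrite !mxE.
  by case: insub => [j'|]; rewrite ?fZ ?mxE ?mulr0.
- move=> x y xD yD E; apply: finj => //; apply/rowP => j'.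
  move/rowP/(_ (widen_ord km j')): E; rewrite !mxE /=.
  case: insubP => [j'' _ h|]; last by rewrite ltn_ord.
  by have -> : j'' = j' by apply: val_inj.
Qed.

End Gen.

Section Main.
Variables (R : finComNzRingType) (w : nat) (Rs : 'I_w -> finComNzRingType)
  (pi : forall i : 'I_w, {rmorphism R -> Rs i}).
Hypothesis Hinj : forall x y : R, (forall i, pi i x = pi i y) -> x = y.
Hypothesis Hsurj : forall y : (forall i, Rs i), exists x : R, forall i, pi i x = y i.

Definition lift (y : forall i, Rs i) : R :=
  odflt 0 [pick x | [forall i, pi i x == y i]].

Lemma liftP y i : pi i (lift y) = y i.
Proof.
rewrite /lift; case: pickP => [x|H]; first by move/forallP/(_ i)/eqP.
have [x Hx] := Hsurj y.
have: [forall j, pi j x == y j] by apply/forallP => j; apply/eqP; exact: Hx.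
by rewrite H.
Qed.

Definition e (i : 'I_w) : R := lift (fun j => if j == i then 1 else 0).

Lemma pi_eM i j x : pi j (e i * x) = if j == i then pi j x else 0.
Proof. by rewrite rmorphM liftP; case: ifP; rewrite ?mul1r ?mul0r. Qed.

Definition sing i (a : Rs i) : forall j, Rs j :=
  fun j => if i =P j is ReflectT h then eq_rect i Rs a j h else 0.

Lemma sing_i i (a : Rs i) : sing a i = a.
Proof.
rewrite /sing; case: (i =P i) => [h|//].
by rewrite (eq_irrelevance h erefl).
Qed.

Definition liftc i (a : Rs i) : R := lift (sing a).
Lemma liftcP i (a : Rs i) : pi i (liftc a) = a.
Proof. by rewrite /liftc liftP sing_i. Qed.

Lemma eZ1 i m (u v : 'rV[R]_m) : map_mx (pi i) u = map_mx (pi i) v -> e i *: u = e i *: v.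
Proof.
move=> /rowP H; apply/rowP => k; apply: Hinj => j; rewrite !mxE !pi_eM.
case: ifP => // /eqP ->; by move: (H k); rewrite !mxE.
Qed.

Lemma eZ2 i m (u v : 'rV[R]_m) : e i *: u = e i *: v -> map_mx (pi i) u = map_mx (pi i) v.
Proof.
move=> /rowP H; apply/rowP => k; move: (H k); rewrite !mxE => /(congr1 (pi i)).
by rewrite !pi_eM eqxx.
Qed.

Lemma mpZe i m (u : 'rV[R]_m) : map_mx (pi i) (e i *: u) = map_mx (pi i) u.
Proof. by apply/rowP => k; rewrite !mxE pi_eM eqxx. Qed.

Variables (n : nat) (C : {set 'rV[R]_n}).
Hypothesis HC : is_linear_code C.

Lemma mem_proj i x : x \in C -> map_mx (pi i) x \in proj_code (pi i) C.
Proof. by move=> xC; apply: imset_f. Qed.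

Lemma dmin_le_proj i : (dmin C <= dmin (proj_code (pi i) C))%N.
Proof.
have [C0 CD CZ] := HC.
apply: (dmin_geq (P := fun v => dmin C <= v)%N).
- exact: dmin_leq_n.
- by move=> a b ha hb; rewrite leq_min ha hb.
move=> u v /imsetP[x xC ->] /imsetP[y yC ->] ne.
have exC : e i *: x \in C by apply: CZ.
have eyC : e i *: y \in C by apply: CZ.
have ne' : e i *: x != e i *: y by apply: contra ne => /eqP/eZ2 ->.
apply: leq_trans (dmin_le exC eyC ne') _.
rewrite /hamming; apply: subset_leq_card; apply/subsetP => k; rewrite !inE !mxE.
apply: contra => /eqP E; apply/eqP; apply: Hinj => j; rewrite !pi_eM.
by case: ifP => // /eqP ->.
Qed.

Lemma proj_le_dmin (i0 : 'I_w) : exists j, (dmin (proj_code (pi j) C) <= dmin C)%N.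
Proof.
apply: (dmin_geq (P := fun v => exists j, dmin (proj_code (pi j) C) <= v)%N).
- by exists i0; apply: dmin_leq_n.
- move=> a b [j ha] [j' hb]; case: (leqP a b) => ab.
    by exists j.
  by exists j'.
move=> x y xC yC ne.
have [j hj|none] := pickP [pred j : 'I_w | map_mx (pi j) x != map_mx (pi j) y].
  exists j; apply: leq_trans (dmin_le (mem_proj j xC) (mem_proj j yC) hj) _.
  apply: subset_leq_card; apply/subsetP => k; rewrite !inE !mxE.
  by apply: contra => /eqP->.
case/eqP: ne; apply/rowP => k; apply: Hinj => j.
move: (none j) => /= /negbFE /eqP /rowP /(_ k); by rewrite !mxE.
Qed.

Lemma embeds_proj i k : embeds_in C k -> embeds_in (proj_code (pi i) C) k.
Proof.
have [C0 CD CZ] := HC.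
case=> f [fD fZ finj].
pose sec u := odflt 0 [pick x in C | map_mx (pi i) x == u].
have secP u : u \in proj_code (pi i) C -> sec u \in C /\ map_mx (pi i) (sec u) = u.
  case/imsetP=> x xC ->; rewrite /sec; case: pickP => [y /andP[yC /eqP ->] //|H].
  by move: (H x); rewrite xC eqxx.
have key x y : x \in C -> y \in C -> map_mx (pi i) x = map_mx (pi i) y ->
    map_mx (pi i) (f x) = map_mx (pi i) (f y).
  move=> xC yC /eZ1 h.
  by rewrite -(mpZe i (f x)) -(mpZe i (f y)) -!fZ // h.
have inj x y : x \in C -> y \in C -> map_mx (pi i) (f x) = map_mx (pi i) (f y) ->
    map_mx (pi i) x = map_mx (pi i) y.
  move=> xC yC /eZ1; rewrite -!fZ // => /finj h; apply: eZ2; apply: h; exact: CZ.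
exists (fun u => map_mx (pi i) (f (sec u))); split.
- move=> u v uD vD /=.
  have [xC xu] := secP u uD; have [yC yv] := secP v vD.
  have uvD : u + v \in proj_code (pi i) C.
    by rewrite -xu -yv -map_mxD; apply: mem_proj; apply: CD.
  have [zC zuv] := secP _ uvD.
  rewrite (key _ (sec u + sec v)) ?CD //; last by rewrite map_mxD xu yv.
  by rewrite fD // map_mxD.
- move=> a u uD /=.
  have [xC xu] := secP u uD.
  have auD : a *: u \in proj_code (pi i) C.
    by rewrite -xu -(liftcP a) -map_mxZ; apply: mem_proj; apply: CZ.
  have [zC zau] := secP _ auD.
  rewrite (key _ (liftc a *: sec u)) ?CZ //; last by rewrite map_mxZ liftcP xu.
  by rewrite fZ // map_mxZ liftcP.
- move=> u v uD vD /= E.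
  have [xC xu] := secP u uD; have [yC yv] := secP v vD.
  by rewrite -xu -yv; apply: inj.
Qed.

Lemma embeds_all k : (forall i, embeds_in (proj_code (pi i) C) k) -> embeds_in C k.
Proof.
move=> H.
pose g i := proj1_sig (constructive_indefinite_description _ (H i)).
have gP i : _ := proj2_sig (constructive_indefinite_description _ (H i)).
exists (fun x => \row_j lift (fun i => g i (map_mx (pi i) x) 0 j)); split.
- move=> x y xC yC; apply/rowP => j; apply: Hinj => i.
  have [gD _ _] := gP i.
  by rewrite !mxE rmorphD !liftP /g map_mxD gD ?mem_proj // mxE.
- move=> a x xC; apply/rowP => j; apply: Hinj => i.
  have [_ gZ _] := gP i.
  by rewrite !mxE rmorphM !liftP /g map_mxZ gZ ?mem_proj // mxE.
- move=> x y xC yC /rowP E; apply/rowP => k'; apply: Hinj => i.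
  have [_ _ gI] := gP i.
  have : map_mx (pi i) x = map_mx (pi i) y.
    apply: gI; rewrite ?mem_proj //; apply/rowP => j.
    by move: (E j); rewrite !mxE => /(congr1 (pi i)); rewrite !liftP /g.
  by move/rowP/(_ k'); rewrite !mxE.
Qed.

End Main.

Unset Implicit Arguments. Set Strict Implicit.

Theorem mainTheorem5
  (R : finComNzRingType) (w : nat) (Rs : 'I_w -> finComNzRingType)
  (pi : forall i : 'I_w, {rmorphism R -> Rs i})
  (Hchain : forall i, is_chain_ring (Rs i))
  (Hinj : forall x y : R, (forall i, pi i x = pi i y) -> x = y)
  (Hsurj : forall y : (forall i, Rs i), exists x : R, forall i, pi i x = y i)
  (n : nat) (C : {set 'rV[R]_n}) (HC : is_linear_code C)
  (r : nat) (hr : (0 < r)%N) (K : 'I_w -> nat)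
  (Hcomp : forall i : 'I_w,
     [/\ proj_code (pi i) C != [set 0],
         has_locality (proj_code (pi i) C) r,
         is_rank (proj_code (pi i) C) (K i) &
         (dmin (proj_code (pi i) C))%:Z
           = n%:Z - (K i)%:Z - (ceil_div (K i) r)%:Z + 2]) :
  forall KC : nat, is_rank C KC ->
    (dmin C)%:Z = n%:Z - KC%:Z - (ceil_div KC r)%:Z + 2.
Proof.
move=> KC [eKC minKC].
have w0 : (0 < w)%N.
  rewrite lt0n; apply/negP => /eqP w0.
  have : (1 : R) = 0 by apply: Hinj => i; have := ltn_ord i; move: (nat_of_ord i) => m; rewrite w0.
  by move/eqP; rewrite oner_eq0.
pose i00 := Ordinal w0.
have [i0 Hmax] : exists i0, forall i, (K i <= K i0)%N.
  exists [arg max_(i > i00) K i]; move=> i.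
  by case: arg_maxnP => // j _; apply.
have KiKC i : (K i <= KC)%N.
  have [_ _ [_ mK] _] := Hcomp i; apply: mK; exact: (embeds_proj Hinj Hsurj HC).
have KCK0 : (KC <= K i0)%N.
  apply: minKC; apply: (embeds_all Hinj Hsurj) => i.
  have [_ _ [eK _] _] := Hcomp i; exact: embeds_pad (Hmax i) eK.
have eKC0 : KC = K i0 by apply/eqP; rewrite eqn_leq KCK0 KiKC.
have d1 := dmin_le_proj Hinj Hsurj HC i0.
have [j dj] := proj_le_dmin Hinj C i0.
have [_ _ _ E0] := Hcomp i0.
have [_ _ _ Ej] := Hcomp j.
have cm : (ceil_div (K j) r <= ceil_div (K i0) r)%N.
  by rewrite /ceil_div leq_div2r // leq_add2r.
have kj := Hmax j.
rewrite eKC0.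
lia.
Qed.
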